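(* Let $N,K,d,T$ be positive integers, $W>0$ and $L_0>0$. For each round $t\in[T]$ and item $i\in[N]$ let $\mathbf{x}_{ti}\in\mathbb{R}^d$ be a feature vector with $\|\mathbf{x}_{ti}\|_2\le 1$, and let $\boldsymbol\vartheta^\star=(\boldsymbol\psi^\star,\boldsymbol\phi^\star)\in\mathbb{R}^{2d}$ satisfy $\|\boldsymbol\vartheta^\star\|_2\le W$ and $\langle\boldsymbol\phi^\star,\mathbf{x}_{ti}\rangle\ge L_0$ for all $t\in[T]$, $i\in[N]$. For each $t$ let $(S_t^\star,\mathbf{p}_t^\star)\in\operatorname{argmax}_{S\in\mathcal{S}_K,\ \mathbf{p}\in\mathbb{R}_+^N} R_t(S,\mathbf{p})$. Then for all $t\in[T]$ and all $i\in S_t^\star$, $$0\le p^\star_{ti}\le P:=\frac{3+W+\log K}{L_0}.$$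
   Context: $\mathcal{S}_K=\{S\subseteq[N]:|S|\le K\}$. For a price $p$, the attraction of item $i$ at round $t$ is $v_{ti}(p)=\exp(\langle\boldsymbol\psi^\star,\mathbf{x}_{ti}\rangle-\langle\boldsymbol\phi^\star,\mathbf{x}_{ti}\rangle p)$, and the expected revenue of offering assortment $S$ at price vector $\mathbf{p}\in\mathbb{R}_+^N$ is the multinomial-logit revenue $R_t(S,\mathbf{p})=\dfrac{\sum_{i\in S}p_i v_{ti}(p_i)}{1+\sum_{j\in S}v_{tj}(p_j)}$. *)

(* Defs.v *)
From HB Require Import structures.
From mathcomp Require Import all_boot all_order all_algebra.
From mathcomp Require Import all_classical all_reals all_analysis.
Set Implicit Arguments. Unset Strict Implicit. Unset Printing Implicit Defensive.
Import Order.TTheory GRing.Theory Num.Theory.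
Local Open Scope ring_scope.

Definition dotv (R : realType) (d : nat) (u v : 'rV[R]_d) : R :=
  \sum_(k < d) u 0 k * v 0 k.
Definition norm2 (R : realType) (d : nat) (u : 'rV[R]_d) : R :=
  Num.sqrt (dotv u u).
(* Norm of the stacked vector (psi, phi) in R^{2d}. *)
Definition norm2_pair (R : realType) (d : nat) (u v : 'rV[R]_d) : R :=
  Num.sqrt (dotv u u + dotv v v).

Definition attraction (R : realType) (d : nat) (psi phi x : 'rV[R]_d) (p : R) : R :=
  expR (dotv psi x - dotv phi x * p).

Definition revenue (R : realType) (d N : nat) (psi phi : 'rV[R]_d)
  (xt : 'I_N -> 'rV[R]_d) (S : {set 'I_N}) (p : 'I_N -> R) : R :=
  (\sum_(i in S) p i * attraction psi phi (xt i) (p i)) /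
  (1 + \sum_(j in S) attraction psi phi (xt j) (p j)).

(* Main.v *)
Require Import Defs.
From HB Require Import structures.
From mathcomp Require Import all_boot all_order all_algebra.
From mathcomp Require Import all_classical all_reals all_analysis.
From mathcomp Require Import ring lra.
Import Order.TTheory GRing.Theory Num.Theory.
Local Open Scope ring_scope.

Section H.
Variable R : realType.

Lemma gbound_gen (a b c q : R) : 0 < b ->
  b * (q - c) * expR (1 - b * (q - c)) <= 1 ->
  (q - c) * expR (a - b * q) <= expR (a - b * c - 1) / b.
Proof.
move=> hb h.
have -> : a - b * q = (a - b * c - 1) + (1 - b * (q - c)) by ring.
rewrite expRD.
set E := expR (a - b * c - 1). set F := expR (1 - b * (q - c)).
have hE : 0 < E by apply: expR_gt0.
rewrite ler_pdivlMr //.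
have -> : (q - c) * (E * F) * b = E * (b * (q - c) * F) by ring.
by rewrite -[X in _ <= X]mulr1 ler_wpM2l // ltW.
Qed.

Lemma gbound_gen_lt (a b c q : R) : 0 < b ->
  b * (q - c) * expR (1 - b * (q - c)) < 1 ->
  (q - c) * expR (a - b * q) < expR (a - b * c - 1) / b.
Proof.
move=> hb h.
have -> : a - b * q = (a - b * c - 1) + (1 - b * (q - c)) by ring.
rewrite expRD.
set E := expR (a - b * c - 1). set F := expR (1 - b * (q - c)).
have hE : 0 < E by apply: expR_gt0.
rewrite ltr_pdivlMr //.
have -> : (q - c) * (E * F) * b = E * (b * (q - c) * F) by ring.
by rewrite -[X in _ < X]mulr1 ltr_pM2l.
Qed.

Lemma yF_le (y : R) : y * expR (1 - y) <= 1.
Proof.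
have h := expR_ge1Dx (y - 1).
have hF : 0 < expR (1 - y) by apply: expR_gt0.
have hFG : expR (y - 1) * expR (1 - y) = 1.
  by rewrite -expRD addrC subrKA subrr expR0.
nra.
Qed.

Lemma yF_lt (y : R) : 1 < y -> y * expR (1 - y) < 1.
Proof.
move=> hy.
have h : 1 + (y - 1) < expR (y - 1).
  apply: expR_gt1Dx; rewrite subr_eq0; apply/eqP => e; move: hy; rewrite e ltxx.
  by [].
have hF : 0 < expR (1 - y) by apply: expR_gt0.
have hFG : expR (y - 1) * expR (1 - y) = 1.
  by rewrite -expRD addrC subrKA subrr expR0.
nra.
Qed.

Lemma gbound (a b c q : R) : 0 < b ->
  (q - c) * expR (a - b * q) <= expR (a - b * c - 1) / b.
Proof. by move=> hb; apply: gbound_gen => //; apply: yF_le. Qed.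

Lemma gbound_lt (a b c q : R) : 0 < b -> c + b^-1 < q ->
  (q - c) * expR (a - b * q) < expR (a - b * c - 1) / b.
Proof.
move=> hb hq; apply: gbound_gen_lt => //; apply: yF_lt.
have h1 : b^-1 < q - c by lra.
have : b * b^-1 < b * (q - c) by rewrite ltr_pM2l.
by rewrite mulfV ?gt_eqF.
Qed.

Section Main.
Variables (N : nat) (S : {set 'I_N}) (a b : 'I_N -> R).

Definition rev (p : 'I_N -> R) :=
  (\sum_(i in S) p i * expR (a i - b i * p i)) /
  (1 + \sum_(j in S) expR (a j - b j * p j)).

Lemma den_gt0 (p : 'I_N -> R) : 0 < 1 + \sum_(j in S) expR (a j - b j * p j).
Proof.
have : 0 <= \sum_(j in S) expR (a j - b j * p j) by apply: sumr_ge0 => j _; apply: expR_ge0.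
lra.
Qed.

Lemma rev_ge0 (p : 'I_N -> R) : (forall j, 0 <= p j) -> 0 <= rev p.
Proof.
move=> hp; rewrite /rev divr_ge0 ?(ltW (den_gt0 p)) //.
by apply: sumr_ge0 => j _; rewrite mulr_ge0 ?expR_ge0.
Qed.

Lemma rev_id (p : 'I_N -> R) :
  rev p = \sum_(j in S) (p j - rev p) * expR (a j - b j * p j).
Proof.
under eq_bigr do rewrite mulrBl.
rewrite sumrB -mulr_sumr.
have hD := den_gt0 p.
rewrite /rev.
set U := \sum_(i in S) _.
set V := \sum_(i in S) _.
have hD' : 1 + V != 0 by rewrite gt_eqF.
field.
exact: hD'.
Qed.

Lemma local_opt (p : 'I_N -> R) i q : i \in S ->
  rev (fun j => if j == i then q else p j) <= rev p ->
  (q - rev p) * expR (a i - b i * q) <= (p i - rev p) * expR (a i - b i * p i).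
Proof.
move=> hi h.
have hD := den_gt0 (fun j => if j == i then q else p j).
move: h hD.
have e1 : \sum_(j in S) (if j == i then q else p j) * expR (a j - b j * (if j == i then q else p j))
   = q * expR (a i - b i * q) + \sum_(j in S | j != i) p j * expR (a j - b j * p j).
  rewrite (bigD1 i) //= eqxx; congr (_ + _); apply: eq_bigr => j /andP[_ /negbTE ->] //.
have e2 : \sum_(j in S) expR (a j - b j * (if j == i then q else p j))
   = expR (a i - b i * q) + \sum_(j in S | j != i) expR (a j - b j * p j).
  rewrite (bigD1 i) //= eqxx; congr (_ + _); apply: eq_bigr => j /andP[_ /negbTE ->] //.
have hr : rev p * (1 + (expR (a i - b i * p i) + \sum_(j in S | j != i) expR (a j - b j * p j)))
   = p i * expR (a i - b i * p i) + \sum_(j in S | j != i) p j * expR (a j - b j * p j).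
  rewrite -(bigD1 i) //= -(bigD1 i (F := fun j => p j * expR (a j - b j * p j))) //=.
  by rewrite /rev divfK // gt_eqF // den_gt0.
rewrite {1}/rev e1 e2.
move: hr.
set r := rev p; set w := expR (a i - b i * q); set v := expR (a i - b i * p i).
set A := \sum_(j in S | j != i) _; set B := \sum_(j in S | j != i) _.
move=> hr h hD.
move: h; rewrite ler_pdivrMr //.
nra.
Qed.

Lemma pi_le (ps : 'I_N -> R) i : i \in S -> 0 < b i -> (forall j, 0 <= ps j) ->
  (forall p, (forall j, 0 <= p j) -> rev p <= rev ps) ->
  ps i <= rev ps + (b i)^-1.
Proof.
move=> hi hb hps hopt.
rewrite leNgt; apply/negP => hlt.
set q := rev ps + (b i)^-1.
have hq : 0 <= q by rewrite addr_ge0 ?rev_ge0 // invr_ge0 ltW.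
have h2 := @gbound_lt (a i) (b i) (rev ps) (ps i) hb hlt.
have e : (q - rev ps) * expR (a i - b i * q) = expR (a i - b i * rev ps - 1) / b i.
  rewrite /q addrC addKr mulrDr mulfV ?gt_eqF // opprD addrA mulrC.
  by [].
have : (q - rev ps) * expR (a i - b i * q) <= (ps i - rev ps) * expR (a i - b i * ps i).
  have hp' : forall j, 0 <= (fun j => if j == i then q else ps j) j.
    by move=> j /=; case: (j == i).
  exact: (local_opt ps i q hi (hopt _ hp')).
lra.
Qed.

Lemma price_bound (K : nat) (W L0 : R) (ps : 'I_N -> R) :
  0 <= W -> 0 < L0 -> (0 < K)%N -> (#|S| <= K)%N -> (forall j, 0 <= ps j) ->
  (forall j, a j <= W) -> (forall j, L0 <= b j) ->
  (forall p, (forall j, 0 <= p j) -> rev p <= rev ps) ->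
  forall i, i \in S -> ps i <= (3 + W + ln (K%:R)) / L0.
Proof.
move=> hW hL hK hS hps ha hb hopt i hi.
set r := rev ps.
have hr0 : 0 <= r by apply: rev_ge0.
set C := expR (W - L0 * r - 1) / L0.
have hC0 : 0 <= C by rewrite divr_ge0 ?expR_ge0 // ltW.
have hrC : r <= K%:R * C.
  rewrite {1}/r rev_id -/r.
  apply: (@le_trans _ _ (\sum_(j in S) C)).
    apply: ler_sum => j _.
    apply: (le_trans (@gbound (a j) (b j) r (ps j) _)).
      exact: (lt_le_trans hL (hb j)).
    have hbj := hb j; have haj := ha j.
    have hbj0 : 0 < b j by exact: (lt_le_trans hL hbj).
    have hX : expR (a j - b j * r - 1) <= expR (W - L0 * r - 1).
      rewrite ler_expR. have : L0 * r <= b j * r by rewrite ler_wpM2r. lra.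
    have hX0 := expR_gt0 (a j - b j * r - 1).
    rewrite /C ler_pdivrMr // mulrAC ler_pdivlMr //.
    have h1 : 0 <= (expR (W - L0 * r - 1) - expR (a j - b j * r - 1)) * b j.
      by rewrite mulr_ge0 ?subr_ge0 // ltW.
    have h2 : 0 <= expR (a j - b j * r - 1) * (b j - L0).
      by rewrite mulr_ge0 ?subr_ge0 // ltW.
    lra.
  by rewrite sumr_const -[C *+ _]mulr_natl ler_wpM2r // ler_nat.
have hKp : 0 < (K%:R : R) by rewrite ltr0n.
have hlnK : expR (ln K%:R) = (K%:R : R) by rewrite lnK // posrE.
have hrr : L0 * r <= 1 + W + ln K%:R.
  rewrite leNgt; apply/negP => hgt.
  have h1 : K%:R * expR (W - L0 * r - 1) < 1.
    rewrite -hlnK -expRD -[X in _ < X]expR0 ltr_expR. lra.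
  have : L0 * r <= K%:R * expR (W - L0 * r - 1).
    move: hrC; rewrite /C mulrA ler_pdivlMr // mulrC //.
  have : 0 <= ln (K%:R : R) by apply: ln_ge0; rewrite ler1n.
  lra.
have hbi : L0 <= b i := hb i.
have hbi0 : 0 < b i by exact: (lt_le_trans hL hbi).
have hpi := @pi_le ps i hi hbi0 hps hopt.
have hib : L0 * (b i)^-1 <= 1 by rewrite ler_pdivrMr // mul1r.
have hib0 : 0 < (b i)^-1 by rewrite invr_gt0.
rewrite ler_pdivlMr //.
have : ps i * L0 <= r * L0 + (b i)^-1 * L0.
  by rewrite -mulrDl ler_wpM2r // ltW.
nra.
Qed.
End Main.

Lemma dotv_ge0 (d : nat) (u : 'rV[R]_d) : 0 <= dotv u u.
Proof. by apply: sumr_ge0 => k _; rewrite -expr2 sqr_ge0. Qed.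

Lemma dot_le (d : nat) (u x : 'rV[R]_d) (W : R) : 0 < W ->
  dotv u u <= W ^+ 2 -> dotv x x <= 1 -> dotv u x <= W.
Proof.
move=> hW hu hx.
have h : 0 <= \sum_(k < d) (u 0 k - W * x 0 k) ^+ 2.
  by apply: sumr_ge0 => k _; apply: sqr_ge0.
have e : \sum_(k < d) (u 0 k - W * x 0 k) ^+ 2
   = dotv u u - 2 * W * dotv u x + W ^+ 2 * dotv x x.
  rewrite /dotv !mulr_sumr -sumrB -big_split /=.
  by apply: eq_bigr => k _; ring.
rewrite e in h.
have h2 : W ^+ 2 * dotv x x <= W ^+ 2 by rewrite -[X in _ <= X]mulr1 ler_wpM2l ?sqr_ge0.
have h3 : W * dotv u x <= W * W by nra.
by rewrite ler_pM2l in h3.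
Qed.

End H.

Theorem lemma2p1 (R : realType) (N K d T : nat) (W L0 : R)
  (x : 'I_T -> 'I_N -> 'rV[R]_d) (psi phi : 'rV[R]_d)
  (Sstar : 'I_T -> {set 'I_N}) (pstar : 'I_T -> 'I_N -> R) :
  (0 < N)%N -> (0 < K)%N -> (0 < d)%N -> (0 < T)%N ->
  0 < W -> 0 < L0 ->
  (forall t i, norm2 (x t i) <= 1) ->
  norm2_pair psi phi <= W ->
  (forall t i, L0 <= dotv phi (x t i)) ->
  (* (Sstar t, pstar t) is a maximizer of R_t over S_K x R_+^N *)
  (forall t, (#|Sstar t| <= K)%N /\ (forall i, 0 <= pstar t i)) ->
  (forall t (S : {set 'I_N}) (p : 'I_N -> R),
      (#|S| <= K)%N -> (forall i, 0 <= p i) ->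
      revenue psi phi (x t) S p <= revenue psi phi (x t) (Sstar t) (pstar t)) ->
  forall t i, i \in Sstar t ->
    0 <= pstar t i /\ pstar t i <= (3 + W + ln (K%:R)) / L0.
Proof.
move=> _ hK _ _ hW hL hx hpair hphi hSK hopt t i hi.
have [hcard hps] := hSK t.
split; first exact: hps.
have huu : dotv psi psi <= W ^+ 2.
  move: hpair; rewrite /norm2_pair.
  have hs : 0 <= dotv psi psi + dotv phi phi by rewrite addr_ge0 ?dotv_ge0.
  have hs2 := sqr_sqrtr hs.
  have hs0 := sqrtr_ge0 (dotv psi psi + dotv phi phi).
  have := @dotv_ge0 R d phi.
  move=> hf hle; nra.
have hxx : forall j, dotv (x t j) (x t j) <= 1.
  move=> j; have h := hx t j; rewrite /norm2 in h.
  by rewrite -(ler_sqrt _ ler01) sqrtr1.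
apply: (@price_bound R N (Sstar t) (fun j => dotv psi (x t j))
          (fun j => dotv phi (x t j)) K W L0 (pstar t)) => //.
- exact: ltW.
- by move=> j; apply: dot_le.
- by move=> p hp; exact: (hopt t (Sstar t) p hcard hp).
Qed.
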